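(* Let $y,p\in\mathbb R^2$ and $a,b>0$. For $R\in\mathbb R^{2\times2}$ and $\lambda>0$ define \[ G(R,\lambda):=p^TR^T\begin{pmatrix}\frac{\lambda+1}{a\lambda+b}&0\\0&\frac{\lambda+1}{a+b\lambda}\end{pmatrix}Ry. \] Then \[ \operatorname{cl}G(\mathrm O(2),(0,\infty))=\frac12\Big(\frac1a+\frac1b\Big)y^Tp+[-1,1]\cdot\frac12\Big|\frac1a-\frac1b\Big|\,\|y\|_2\|p\|_2. \]
   Context: $\mathrm O(2)=\{R\in\mathbb R^{2\times2}:R^TR=I_2\}$; $\operatorname{cl}$ denotes closure in $\mathbb R$; $\|\cdot\|_2$ Euclidean norm; $c+[-1,1]\cdot t$ denotes $[c-t,c+t]$. *)

(* Defs.v *)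
From HB Require Import structures.
From mathcomp Require Import all_boot all_order all_algebra.
From mathcomp Require Import all_classical all_reals all_analysis.
Set Implicit Arguments. Unset Strict Implicit. Unset Printing Implicit Defensive.
Import Order.TTheory GRing.Theory Num.Theory.
Local Open Scope ring_scope.
Local Open Scope classical_set_scope.

Definition O2 (R : realType) : set 'M[R]_2 := [set Q | Q^T *m Q = 1%:M].

Definition norm2 (R : realType) (v : 'cV[R]_2) : R :=
  Num.sqrt (\sum_(i < 2) v i 0 ^+ 2).

Definition dot2 (R : realType) (v w : 'cV[R]_2) : R := (v^T *m w) 0 0.

Definition Gfun (R : realType) (a b : R) (y p : 'cV[R]_2) (Q : 'M[R]_2) (l : R) : R :=
  (p^T *m Q^T *m
     diag_mx (\row_(i < 2) (if i == 0 then (l + 1) / (a * l + b)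
                            else (l + 1) / (a + b * l)))
   *m Q *m y) 0 0.

(* Main.v *)
Require Import Defs.
From HB Require Import structures.
From mathcomp Require Import all_boot all_order all_algebra.
From mathcomp Require Import all_classical all_reals all_analysis.
From mathcomp Require Import ring lra.
Import Order.TTheory GRing.Theory Num.Theory.
Import numFieldNormedType.Exports.
Local Open Scope ring_scope.
Local Open Scope classical_set_scope.

Lemma Gexp (R : realType) (a b : R) (y p : 'cV[R]_2) (Q : 'M[R]_2) (l : R) :
  Gfun a b y p Q l =
  (l + 1) / (a * l + b) * ((Q 0 0 * p 0 0 + Q 0 1 * p 1 0) * (Q 0 0 * y 0 0 + Q 0 1 * y 1 0))
 + (l + 1) / (a + b * l) * ((Q 1 0 * p 0 0 + Q 1 1 * p 1 0) * (Q 1 0 * y 0 0 + Q 1 1 * y 1 0)).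
Proof.
rewrite /Gfun !mxE !big_ord_recr !big_ord0 /= !add0r !mxE.
rewrite !big_ord_recr !big_ord0 /= !add0r !mxE.
rewrite !big_ord_recr !big_ord0 /= !add0r !mxE.
rewrite !big_ord_recr !big_ord0 /= !add0r !mxE.
have e0 : widen_ord (leqnSn 1) ord_max = 0 :> 'I_2 by apply/val_inj.
have e1 : ord_max = 1 :> 'I_2 by apply/val_inj.
rewrite !e0 !e1 !mulr1n !mulr0n; ring.
Qed.

Lemma O2E (R : realType) (Q : 'M[R]_2) : O2 Q ->
  [/\ Q 0 0 ^+ 2 + Q 1 0 ^+ 2 = 1, Q 0 1 ^+ 2 + Q 1 1 ^+ 2 = 1 &
      Q 0 0 * Q 0 1 + Q 1 0 * Q 1 1 = 0].
Proof.
rewrite /O2 /= => h.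
have h00 := congr1 (fun M : 'M[R]_2 => M 0 0) h.
have h11 := congr1 (fun M : 'M[R]_2 => M 1 1) h.
have h01 := congr1 (fun M : 'M[R]_2 => M 0 1) h.
move: h00 h11 h01 => /=; rewrite !mxE !big_ord_recr !big_ord0 /= !add0r !mxE.
have e0 : widen_ord (leqnSn 1) ord_max = 0 :> 'I_2 by apply/val_inj.
have e1 : ord_max = 1 :> 'I_2 by apply/val_inj.
rewrite !e0 !e1 /= => h00 h11 h01.
by split=> //; rewrite !expr2.
Qed.

Lemma dot2E (R : realType) (y p : 'cV[R]_2) : dot2 y p = y 0 0 * p 0 0 + y 1 0 * p 1 0.
Proof.
rewrite /dot2 !mxE !big_ord_recr !big_ord0 /= !add0r !mxE.
have e0 : widen_ord (leqnSn 1) ord_max = 0 :> 'I_2 by apply/val_inj.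
have e1 : ord_max = 1 :> 'I_2 by apply/val_inj.
by rewrite !e0 !e1.
Qed.

Lemma norm2E (R : realType) (y : 'cV[R]_2) : norm2 y = Num.sqrt (y 0 0 ^+ 2 + y 1 0 ^+ 2).
Proof.
rewrite /norm2 !big_ord_recr !big_ord0 /= !add0r.
have e0 : widen_ord (leqnSn 1) ord_max = 0 :> 'I_2 by apply/val_inj.
have e1 : ord_max = 1 :> 'I_2 by apply/val_inj.
by rewrite !e0 !e1.
Qed.
Lemma dbound (R : realType) (A B d : R) : (d - A) * (d - B) <= 0 ->
  `|d - 2^-1 * (A + B)| <= 2^-1 * `|A - B|.
Proof.
move=> h.
have [hAB|hAB] := lerP 0 (A - B); have [hd|hd] := lerP 0 (d - 2^-1 * (A + B)).
- rewrite (ger0_norm hAB) (ger0_norm hd); nra.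
- rewrite (ger0_norm hAB) (ltr0_norm hd); nra.
- rewrite (ltr0_norm hAB) (ger0_norm hd); nra.
- rewrite (ltr0_norm hAB) (ltr0_norm hd); nra.
Qed.

Lemma d1prod (R : realType) (a b l : R) : 0 < a -> 0 < b -> 0 < l ->
  ((l + 1) / (a * l + b) - a^-1) * ((l + 1) / (a * l + b) - b^-1) <= 0.
Proof.
move=> ha hb hl.
have hD : 0 < a * l + b by nra.
have -> : ((l + 1) / (a * l + b) - a^-1) * ((l + 1) / (a * l + b) - b^-1)
   = - (l * (a - b) ^+ 2) / (a * b * (a * l + b) ^+ 2).
  field; apply/and3P; split; rewrite ?gt_eqF //.
apply: mulr_le0_ge0; first by rewrite oppr_le0 mulr_ge0 ?sqr_ge0 ?ltW.
by rewrite invr_ge0 !mulr_ge0 ?sqr_ge0 ?ltW.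
Qed.

Lemma d2prod (R : realType) (a b l : R) : 0 < a -> 0 < b -> 0 < l ->
  ((l + 1) / (a + b * l) - a^-1) * ((l + 1) / (a + b * l) - b^-1) <= 0.
Proof.
move=> ha hb hl.
have hD : 0 < a + b * l by nra.
have -> : ((l + 1) / (a + b * l) - a^-1) * ((l + 1) / (a + b * l) - b^-1)
   = - (l * (a - b) ^+ 2) / (a * b * (a + b * l) ^+ 2).
  field; apply/and3P; split; rewrite ?gt_eqF //.
apply: mulr_le0_ge0; first by rewrite oppr_le0 mulr_ge0 ?sqr_ge0 ?ltW.
by rewrite invr_ge0 !mulr_ge0 ?sqr_ge0 ?ltW.
Qed.

Lemma CS (R : realType) (u1 u2 v1 v2 : R) :
  `|u1 * v1| + `|u2 * v2| <= Num.sqrt (u1 ^+ 2 + u2 ^+ 2) * Num.sqrt (v1 ^+ 2 + v2 ^+ 2).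
Proof.
rewrite -sqrtrM; last by nra.
rewrite -[X in X <= _]ger0_norm ?addr_ge0 // -sqrtr_sqr.
apply: ler_wsqrtr.
have h1 : `|u1 * v1| ^+ 2 = u1 ^+ 2 * v1 ^+ 2 by rewrite real_normK ?exprMn // num_real.
have h2 : `|u2 * v2| ^+ 2 = u2 ^+ 2 * v2 ^+ 2 by rewrite real_normK ?exprMn // num_real.
have h3 : `|u1 * v1| * `|u2 * v2| = `|u1 * v2| * `|u2 * v1|.
  by rewrite -!normrM; congr `|_|; ring.
have h4 : `|u1 * v2| ^+ 2 = u1 ^+ 2 * v2 ^+ 2 by rewrite real_normK ?exprMn // num_real.
have h5 : `|u2 * v1| ^+ 2 = u2 ^+ 2 * v1 ^+ 2 by rewrite real_normK ?exprMn // num_real.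
have h6 : 0 <= (`|u1 * v2| - `|u2 * v1|) ^+ 2 by apply: sqr_ge0.
nra.
Qed.

Lemma d1close (R : realType) (a b l : R) : 0 < a -> 0 < b -> 0 < l ->
  `|(l + 1) / (a * l + b) - b^-1| <= l * (`|b - a| / b ^+ 2).
Proof.
move=> ha hb hl.
have hD : 0 < a * l + b by nra.
have -> : (l + 1) / (a * l + b) - b^-1 = l * ((b - a) / (b * (a * l + b))).
  by field; apply/andP; split; rewrite gt_eqF.
rewrite normrM (gtr0_norm hl) ler_pM2l // normrM ler_wpM2l //.
rewrite normfV (gtr0_norm (mulr_gt0 hb hD)) lef_pV2 ?posrE ?exprn_gt0 ?mulr_gt0 //.
rewrite expr2 ler_pM2l //; nra.
Qed.

Lemma d2close (R : realType) (a b l : R) : 0 < a -> 0 < b -> 0 < l ->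
  `|(l + 1) / (a + b * l) - a^-1| <= l * (`|a - b| / a ^+ 2).
Proof.
move=> ha hb hl.
have hD : 0 < a + b * l by nra.
have -> : (l + 1) / (a + b * l) - a^-1 = l * ((a - b) / (a * (a + b * l))).
  by field; apply/andP; split; rewrite gt_eqF.
rewrite normrM (gtr0_norm hl) ler_pM2l // normrM ler_wpM2l //.
rewrite normfV (gtr0_norm (mulr_gt0 ha hD)) lef_pV2 ?posrE ?exprn_gt0 ?mulr_gt0 //.
rewrite expr2 ler_pM2l //; nra.
Qed.

Lemma halfangle (R : realType) (c s : R) : c ^+ 2 + s ^+ 2 = 1 ->
  exists al be : R, al ^+ 2 + be ^+ 2 = 1 /\ al ^+ 2 - be ^+ 2 = c /\ 2 * al * be = s.
Proof.
move=> h.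
have hc1 : c <= 1 by nra.
have hc2 : -1 <= c by nra.
set sg : R := if 0 <= s then 1 else -1.
have sgs : sg * `|s| = s by rewrite /sg; case: lerP => hs;
  [rewrite ger0_norm // mul1r | rewrite ltr0_norm // mulN1r opprK].
have sg2 : sg ^+ 2 = 1 by rewrite /sg; case: lerP => _; rewrite ?expr1n ?sqrrN ?expr1n.
have e1 : Num.sqrt ((1 + c) / 2) ^+ 2 = (1 + c) / 2 by rewrite sqr_sqrtr //; lra.
have e2 : Num.sqrt ((1 - c) / 2) ^+ 2 = (1 - c) / 2 by rewrite sqr_sqrtr //; lra.
exists (Num.sqrt ((1 + c) / 2)), (sg * Num.sqrt ((1 - c) / 2)).
rewrite exprMn sg2 mul1r e1 e2; split; first lra.
split; first lra.
rewrite mulrCA -mulrA -sqrtrM; last lra.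
have -> : (1 + c) / 2 * ((1 - c) / 2) = (s / 2) ^+ 2.
  have hs : s ^+ 2 = 1 - c ^+ 2 by lra.
  by rewrite expr_div_n hs; field.
rewrite sqrtr_sqr normrM (ger0_norm (_ : 0 <= 2^-1 :> R)) ?invr_ge0 ?ler0n //.
have -> : 2 * (`|s| / 2) = `|s| :> R by field.
exact: sgs.
Qed.

Lemma circ (R : realType) (A B w : R) : w ^+ 2 <= A ^+ 2 + B ^+ 2 ->
  exists al be : R, al ^+ 2 + be ^+ 2 = 1 /\
     (al ^+ 2 - be ^+ 2) * A + 2 * al * be * B = w.
Proof.
move=> hw.
have [N0|N0] := eqVneq (A ^+ 2 + B ^+ 2) 0.
  have hA : A = 0 by apply/eqP; rewrite -sqrf_eq0; apply/eqP; nra.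
  have hB : B = 0 by apply/eqP; rewrite -sqrf_eq0; apply/eqP; nra.
  have hw0 : w = 0 by apply/eqP; rewrite -sqrf_eq0; apply/eqP; nra.
  by exists 1, 0; rewrite hA hB hw0; split; ring.
set N2 := A ^+ 2 + B ^+ 2 in N0 hw *.
set r := Num.sqrt (N2 - w ^+ 2).
have hr : r ^+ 2 = N2 - w ^+ 2 by rewrite sqr_sqrtr // subr_ge0.
have key : (w * A + B * r) ^+ 2 + (w * B - A * r) ^+ 2 = N2 ^+ 2.
  have -> : (w * A + B * r) ^+ 2 + (w * B - A * r) ^+ 2 = (w ^+ 2 + r ^+ 2) * N2
    by rewrite /N2; ring.
  by rewrite hr; ring.
have hcs : ((w * A + B * r) / N2) ^+ 2 + ((w * B - A * r) / N2) ^+ 2 = 1.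
  by rewrite !expr_div_n -mulrDl key divff // expf_neq0.
have [al [be [h1 [h2 h3]]]] := halfangle _ _ _ hcs.
by exists al, be; split=> //; rewrite h2 h3 /N2; field.
Qed.

Lemma upper (R : realType) (y p : 'cV[R]_2) (a b : R) (ha : 0 < a) (hb : 0 < b)
  (Q : 'M[R]_2) (l : R) : O2 Q -> 0 < l ->
  `|Gfun a b y p Q l - 2^-1 * (a^-1 + b^-1) * dot2 y p|
     <= 2^-1 * `|a^-1 - b^-1| * norm2 y * norm2 p.
Proof.
move=> /O2E [h1 h2 h3] hl.
rewrite Gexp dot2E !norm2E.
set u1 := Q 0 0 * p 0 0 + Q 0 1 * p 1 0.
set u2 := Q 1 0 * p 0 0 + Q 1 1 * p 1 0.
set v1 := Q 0 0 * y 0 0 + Q 0 1 * y 1 0.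
set v2 := Q 1 0 * y 0 0 + Q 1 1 * y 1 0.
have hP : y 0 0 * p 0 0 + y 1 0 * p 1 0 = u1 * v1 + u2 * v2.
  have -> : u1 * v1 + u2 * v2 = p 0 0 * y 0 0 * (Q 0 0 ^+ 2 + Q 1 0 ^+ 2)
     + p 1 0 * y 1 0 * (Q 0 1 ^+ 2 + Q 1 1 ^+ 2)
     + (p 0 0 * y 1 0 + p 1 0 * y 0 0) * (Q 0 0 * Q 0 1 + Q 1 0 * Q 1 1) by rewrite /u1/u2/v1/v2; ring.
  by rewrite h1 h2 h3; ring.
have hu : p 0 0 ^+ 2 + p 1 0 ^+ 2 = u1 ^+ 2 + u2 ^+ 2.
  have -> : u1 ^+ 2 + u2 ^+ 2 = p 0 0 ^+ 2 * (Q 0 0 ^+ 2 + Q 1 0 ^+ 2)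
     + p 1 0 ^+ 2 * (Q 0 1 ^+ 2 + Q 1 1 ^+ 2)
     + 2 * p 0 0 * p 1 0 * (Q 0 0 * Q 0 1 + Q 1 0 * Q 1 1) by rewrite /u1/u2; ring.
  by rewrite h1 h2 h3; ring.
have hv : y 0 0 ^+ 2 + y 1 0 ^+ 2 = v1 ^+ 2 + v2 ^+ 2.
  have -> : v1 ^+ 2 + v2 ^+ 2 = y 0 0 ^+ 2 * (Q 0 0 ^+ 2 + Q 1 0 ^+ 2)
     + y 1 0 ^+ 2 * (Q 0 1 ^+ 2 + Q 1 1 ^+ 2)
     + 2 * y 0 0 * y 1 0 * (Q 0 0 * Q 0 1 + Q 1 0 * Q 1 1) by rewrite /v1/v2; ring.
  by rewrite h1 h2 h3; ring.
rewrite hP hu hv -/u1 -/u2 -/v1 -/v2.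
set s0 := 2^-1 * (a^-1 + b^-1).
set t0 := 2^-1 * `|a^-1 - b^-1|.
set d1 := (l + 1) / (a * l + b).
set d2 := (l + 1) / (a + b * l).
have e1 : `|d1 - s0| <= t0 by apply: dbound; apply: d1prod.
have e2 : `|d2 - s0| <= t0 by apply: dbound; apply: d2prod.
have -> : d1 * (u1 * v1) + d2 * (u2 * v2) - s0 * (u1 * v1 + u2 * v2)
   = (d1 - s0) * (u1 * v1) + (d2 - s0) * (u2 * v2) by ring.
apply: le_trans (ler_normD _ _) _.
rewrite !normrM.
have ht0 : 0 <= t0 by rewrite /t0 mulr_ge0 ?invr_ge0 ?ler0n.
apply: le_trans (_ : t0 * (`|u1 * v1| + `|u2 * v2|) <= _).
  rewrite mulrDr !normrM; apply: lerD; apply: ler_wpM2r => //.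
rewrite -mulrA; apply: ler_wpM2l => //.
rewrite [X in _ <= X]mulrC; exact: CS.
Qed.

Lemma ord2P (i : 'I_2) : i = 0 \/ i = 1.
Proof. by case: i => [[|[|//]]] H; [left|right]; apply/val_inj. Qed.

Definition Qm {R : realType} (al be : R) : 'M[R]_2 :=
  \matrix_(i < 2, j < 2) (if i == 0 then (if j == 0 then al else be)
                          else (if j == 0 then be else - al)).

Lemma Qm_O2 (R : realType) (al be : R) : al ^+ 2 + be ^+ 2 = 1 -> O2 (Qm al be).
Proof.
move=> h; rewrite /O2 /=; apply/matrixP => i j.
rewrite !mxE !big_ord_recr !big_ord0 /= !add0r !mxE.
have e0 : widen_ord (leqnSn 1) ord_max = 0 :> 'I_2 by apply/val_inj.
have e1 : ord_max = 1 :> 'I_2 by apply/val_inj.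
rewrite !e0 !e1 /=.
by case: (ord2P i) => ->; case: (ord2P j) => -> /=; rewrite -?h ?mulr1n ?mulr0n; ring.
Qed.

Lemma lower (R : realType) (y p : 'cV[R]_2) (a b : R) (ha : 0 < a) (hb : 0 < b)
  (x eps : R) : 0 < eps ->
  `|x - 2^-1 * (a^-1 + b^-1) * dot2 y p| <= 2^-1 * `|a^-1 - b^-1| * norm2 y * norm2 p ->
  exists Q l, [/\ O2 Q, 0 < l & `|x - Gfun a b y p Q l| < eps].
Proof.
move=> heps hx.
set s0 := 2^-1 * (a^-1 + b^-1) in hx.
set t0 := 2^-1 * `|a^-1 - b^-1| in hx.
set k := 2^-1 * (b^-1 - a^-1).
have hk : `|k| = t0.
  by rewrite /k /t0 normrM (ger0_norm (_ : 0 <= 2^-1 :> R)) ?invr_ge0 ?ler0n // distrC.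
set P := dot2 y p in hx.
set N := norm2 y * norm2 p.
have hN : 0 <= N by rewrite /N mulr_ge0 // /norm2 sqrtr_ge0.
set w := if k == 0 then 0 else (x - s0 * P) / k.
have [hxw hw] : x = s0 * P + k * w /\ `|w| <= N.
  rewrite /w; case: eqP => [k0|/eqP k0].
    move: hx; rewrite -/N -mulrA -hk k0 normr0 mul0r normr_le0 subr_eq0 => /eqP ->.
    by rewrite mulr0 addr0.
  split; first by field.
  rewrite normf_div ler_pdivrMr ?normr_gt0 // hk [N * _]mulrC /N mulrA; exact: hx.
set A := p 0 0 * y 0 0 - p 1 0 * y 1 0.
set B := p 0 0 * y 1 0 + p 1 0 * y 0 0.
have hw2 : w ^+ 2 <= A ^+ 2 + B ^+ 2.
  have -> : A ^+ 2 + B ^+ 2 = N ^+ 2.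
    rewrite /N !norm2E exprMn !sqr_sqrtr ?addr_ge0 ?sqr_ge0 //.
    by rewrite /A /B; ring.
  rewrite -real_normK ?num_real //.
  by apply: lerXn2r => //; rewrite nnegrE ?normr_ge0.
have [al [be [hab hc]]] := circ _ _ _ _ hw2.
set X := (P + w) / 2.
set Y := (P - w) / 2.
set K := `|b - a| / b ^+ 2 * `|X| + `|a - b| / a ^+ 2 * `|Y|.
have hK : 0 <= K by rewrite /K addr_ge0 // mulr_ge0 // divr_ge0 // sqr_ge0.
set l := eps / (2 * (K + 1)).
have hl : 0 < l by rewrite /l divr_gt0 // mulr_gt0 //; lra.
exists (Qm al be), l; split => //; first exact: Qm_O2.
rewrite Gexp /Qm !mxE /=.
set d1 := (l + 1) / (a * l + b).
set d2 := (l + 1) / (a + b * l).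
have hP : P = y 0 0 * p 0 0 + y 1 0 * p 1 0 by rewrite /P dot2E.
have hsum : (al * p 0 0 + be * p 1 0) * (al * y 0 0 + be * y 1 0) +
            (be * p 0 0 + - al * p 1 0) * (be * y 0 0 + - al * y 1 0) = P.
  rewrite hP -[RHS]mul1r -hab; ring.
have hdiff : (al * p 0 0 + be * p 1 0) * (al * y 0 0 + be * y 1 0) -
            (be * p 0 0 + - al * p 1 0) * (be * y 0 0 + - al * y 1 0) = w.
  rewrite -hc /A /B; ring.
have -> : (al * p 0 0 + be * p 1 0) * (al * y 0 0 + be * y 1 0) = X.
  by rewrite /X -hsum -hdiff; field.
have -> : (be * p 0 0 + - al * p 1 0) * (be * y 0 0 + - al * y 1 0) = Y.
  by rewrite /Y -hsum -hdiff; field.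
have -> : x - (d1 * X + d2 * Y) = - ((d1 - b^-1) * X + (d2 - a^-1) * Y).
  by rewrite hxw /X /Y /s0 /k; ring.
rewrite normrN.
apply: le_lt_trans (ler_normD _ _) _.
rewrite (normrM (d1 - _) X) (normrM (d2 - _) Y).
have c1 := d1close _ _ _ _ ha hb hl.
have c2 := d2close _ _ _ _ ha hb hl.
apply: le_lt_trans (_ : l * K < eps).
  rewrite /K mulrDr.
  by apply: lerD; rewrite mulrA; apply: ler_wpM2r.
apply: le_lt_trans (_ : l * (K + 1) < eps).
  by apply: ler_wpM2l; [exact: ltW | lra].
rewrite /l; have hK1 : 0 < K + 1 by lra.
have -> : eps / (2 * (K + 1)) * (K + 1) = eps / 2 by field; rewrite gt_eqF.
lra.
Qed.

Theorem mainTheorem14 (R : realType) (y p : 'cV[R]_2) (a b : R)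
  (ha : 0 < a) (hb : 0 < b) :
  closure [set Gfun a b y p Q l | Q in @O2 R & l in [set l : R | 0 < l]] =
  [set x : R |
    (2^-1 * (a^-1 + b^-1) * dot2 y p
       - 2^-1 * `|a^-1 - b^-1| * norm2 y * norm2 p <= x) /\
    (x <= 2^-1 * (a^-1 + b^-1) * dot2 y p
       + 2^-1 * `|a^-1 - b^-1| * norm2 y * norm2 p)].
Proof.
rewrite eqEsubset; split.
- set S := [set x : R | _ /\ _].
  have cS : closed S by apply: closedI; [apply: closed_ge | apply: closed_le].
  have sub : [set Gfun a b y p Q l | Q in @O2 R & l in [set l : R | 0 < l]] `<=` S.
    move=> _ [Q hQ [l hl <-]].
    have := upper _ y p _ _ ha hb _ _ hQ hl.
    by rewrite ler_distl => /andP[].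
  move=> x hx; rewrite ((closure_id S).1 cS).
  exact: closureS sub x hx.
- move=> x [h1 h2] B /nbhs_ballP [e /= he hB].
  have hx : `|x - 2^-1 * (a^-1 + b^-1) * dot2 y p| <=
            2^-1 * `|a^-1 - b^-1| * norm2 y * norm2 p by rewrite ler_distl h1 h2.
  have [Q [l [hQ hl hG]]] := lower _ y p _ _ ha hb _ _ he hx.
  exists (Gfun a b y p Q l); split; first by exists Q => //; exists l.
  by apply: hB; rewrite /ball /=.
Qed.
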